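(* Let $\mathcal T$ be an admissible labeled tree. For an unordered pair of labels $\{i,j\}$ let $b_{ij}$ be the number of edges of $\mathcal T$ whose endpoints have labels $i$ and $j$. Then \[ \sum_{\{i,j\}:\,b_{ij}>2} b_{ij}\le 6\,\Delta(\mathcal T). \]
   Context: Setting: $T$ is a finite rooted tree with levels (root at level $t$, children of a level-$s$ vertex at level $s-1$). A labeling gives each vertex $v$ a label $\ell(v)\in[N]$. The labeled tree $\mathcal T$ is admissible if (i) whenever $u$ is the parent of $v$ and $v$ the parent of $w$, $\ell(u)\ne\ell(w)$; (ii) for every edge $\{u,v\}$ there is another edge $\{u',v'\}$ with $\{\ell(u'),\ell(v')\}=\{\ell(u),\ell(v)\}$. $|V(\mathcal T)|$ is the number of distinct labels used (including the root's), $|E(\mathcal T)|$ the number of edges, and $\Delta(\mathcal T)=\tfrac12|E(\mathcal T)|-|V(\mathcal T)|+1$. *)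

(* Defs.v *)
From mathcomp Require Import all_boot all_order all_algebra.
Set Implicit Arguments. Unset Strict Implicit. Unset Printing Implicit Defensive.
Import Order.TTheory GRing.Theory Num.Theory.

(* Edges are the pairs {v, par v} for v <> root (indexed by the child v). *)
Definition is_rooted_tree (V : finType) (root : V) (par : V -> V) : Prop :=
  par root = root /\ forall v : V, exists k, iter k par v = root.

Definition is_leveling (V : finType) (root : V) (par : V -> V)
    (t : nat) (lev : V -> nat) : Prop :=
  lev root = t /\ forall v : V, v != root -> lev (par v) = (lev v).+1.

Definition edges (V : finType) (root : V) : {set V} := [set v | v != root].

Definition edge_has_labels (V : finType) (N : nat) (par : V -> V)
    (l : V -> 'I_N) (v : V) (i j : 'I_N) : bool :=
  ((l v == i) && (l (par v) == j)) || ((l v == j) && (l (par v) == i)).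

Definition admissible (V : finType) (N : nat) (root : V) (par : V -> V)
    (l : V -> 'I_N) : Prop :=
  (forall w : V, w != root -> par w != root -> l (par (par w)) != l w) /\
  (forall v : V, v \in edges root ->
     exists2 v' : V, (v' \in edges root) && (v' != v) &
        edge_has_labels par l v' (l v) (l (par v))).

(* |V(T)| : number of distinct labels used *)
Definition nlabels (V : finType) (N : nat) (l : V -> 'I_N) : nat :=
  #|[set l v | v : V]|.

Definition nedges (V : finType) (root : V) : nat := #|edges root|.

Definition Delta (V : finType) (N : nat) (root : V) (l : V -> 'I_N) : rat :=
  ((nedges root)%:R / 2 - (nlabels l)%:R + 1)%R.

Definition bcount (V : finType) (N : nat) (root : V) (par : V -> V)
    (l : V -> 'I_N) (i j : 'I_N) : nat :=
  #|[set v in edges root | edge_has_labels par l v i j]|.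

(* Main.v *)
Require Import Defs.
From mathcomp Require Import all_boot all_order all_algebra.
From mathcomp Require Import zify lra.
Import Order.TTheory GRing.Theory Num.Theory.

Section Aux.
Variable N : nat.

Definition key (a b : 'I_N) : 'I_N * 'I_N := if (a <= b)%N then (a, b) else (b, a).

Lemma key_le a b : ((key a b).1 <= (key a b).2)%N.
Proof. rewrite /key; case: ifP => //= /negbT; rewrite -ltnNge => /ltnW //. Qed.

Lemma key_inv a b c d : key a b = key c d -> (a = c /\ b = d) \/ (a = d /\ b = c).
Proof.
rewrite /key; case: ifP => _; case: ifP => _ [-> ->]; by [left | right].
Qed.

Lemma ehl_key a b (p : 'I_N * 'I_N) : (p.1 <= p.2)%N ->
  (((a == p.1) && (b == p.2)) || ((a == p.2) && (b == p.1))) = (key a b == p).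
Proof.
case: p => x y /= hxy.
apply/idP/eqP => [/orP[/andP[/eqP-> /eqP->]|/andP[/eqP-> /eqP->]]|].
- by rewrite /key hxy.
- rewrite /key; case: ifP => // h.
  have exy : x = y by apply: val_inj => /=; lia.
  by rewrite exy.
- by rewrite /key; case: ifP => h [<- <-]; rewrite !eqxx ?orbT.
Qed.
End Aux.
Arguments key {N}.
Arguments key_le {N}.
Arguments key_inv {N} [a b c d].
Arguments ehl_key {N}.

Theorem lemma2p12 (V : finType) (N : nat) (root : V) (par : V -> V)
    (t : nat) (lev : V -> nat) (l : V -> 'I_N) :
  is_rooted_tree root par ->
  is_leveling root par t lev ->
  admissible root par l ->
  ((\sum_(p : 'I_N * 'I_N | (p.1 <= p.2)%N && (2 < bcount root par l p.1 p.2)%N)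
      (bcount root par l p.1 p.2)%:R : rat)
   <= 6 * Delta root l)%R.
Proof.
move=> _ [_ Hlev] [_ Hadm].
set B := fun p : 'I_N * 'I_N => bcount root par l p.1 p.2.
set E := edges root.
set kv := fun v => key (l v) (l (par v)).
have HB : forall p : 'I_N * 'I_N, (p.1 <= p.2)%N ->
    B p = #|[set v | (v \in E) && (kv v == p)]|.
  move=> p hp; rewrite /B /bcount; apply: eq_card => v.
  by rewrite !inE /edge_has_labels ehl_key.
have Hsum : #|E| = (\sum_(p : 'I_N * 'I_N | (p.1 <= p.2)%N) B p)%N.
  rewrite -sum1_card (partition_big kv (fun p : 'I_N * 'I_N => (p.1 <= p.2)%N)) /=;
    last by move=> v _; exact: key_le.
  apply: eq_bigr => p hp; rewrite HB // sum1dep_card.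
  by apply: eq_card => v; rewrite !inE.
have HB2 : forall p : 'I_N * 'I_N, (p.1 <= p.2)%N -> (0 < B p)%N -> (2 <= B p)%N.
  move=> p hp; rewrite HB // card_gt0 => /set0Pn [v]; rewrite inE => /andP[vE /eqP kvp].
  have [v' /andP[v'E v'v] hv'] := Hadm v vE.
  apply/card_gt1P; exists v, v'; split.
  - by rewrite inE vE kvp eqxx.
  - rewrite inE v'E /=. rewrite -kvp /kv; apply/eqP; move: hv'; rewrite /edge_has_labels.
    case/orP => /andP[/eqP-> /eqP->] //.
    rewrite /key; case: ifP; case: ifP => // h1 h2.
    + have e : l v = l (par v) by apply: val_inj => /=; lia.
      by rewrite e.
    + have e : l v = l (par v) by apply: val_inj => /=; lia.
      by rewrite e.
  - by rewrite eq_sym.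
set S := [set p : 'I_N * 'I_N | (p.1 <= p.2)%N && (0 < B p)%N].
set L := [set l v | v : V].
pose vmax c := odflt root [pick v | (l v == c) && [forall w, (l w == c) ==> (lev w <= lev v)%N]].
have vmaxP : forall c, c \in L -> l (vmax c) = c /\ forall w, l w = c -> (lev w <= lev (vmax c))%N.
  move=> c /imsetP [v0 _ ->]; rewrite /vmax; case: pickP => [v /andP[/eqP-> /forallP H]|H0] /=.
    by split => // w hw; move: (H w); rewrite hw eqxx.
  exfalso.
  case: (@arg_maxnP _ v0 (fun v => l v == l v0) lev (eqxx _)) => v hv hmax.
  move: (H0 v); rewrite hv /=; move/negbT/negP; apply; apply/forallP => w.
  by apply/implyP => /hmax.
pose f c := kv (vmax c).
have HL : (#|L| <= #|S| + 1)%N.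
  rewrite (cardsD1 (l root) L).
  have -> : l root \in L by apply: imset_f.
  rewrite addnC leq_add2r.
  have inj : {in L :\ l root &, injective f}.
    move=> c c' /setD1P [hc hcL] /setD1P [hc' hcL'] e.
    have [lv hm] := vmaxP c hcL; have [lv' hm'] := vmaxP c' hcL'.
    have vr : vmax c != root by apply: contraNneq hc => <-; rewrite lv.
    have vr' : vmax c' != root by apply: contraNneq hc' => <-; rewrite lv'.
    case: (key_inv e) => [[]|[h1 h2]]; first by rewrite lv lv'.
    have a1 := hm _ (etrans (esym h1) lv).
    have a2 := hm' _ (etrans h2 lv').
    have := Hlev _ vr; have := Hlev _ vr'.
    lia.
  rewrite -(card_in_imset inj); apply: subset_leq_card; apply/subsetP => p /imsetP [c hc ->].
  have [lv _] := vmaxP c (setD1P hc).2.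
  have vr : vmax c != root by apply: contraNneq (setD1P hc).1 => <-; rewrite lv.
  rewrite inE key_le /= HB ?key_le //; apply/card_gt0P; exists (vmax c).
  by rewrite inE /E /edges inE vr eqxx.
set T := (\sum_(p : 'I_N * 'I_N | (p.1 <= p.2)%N && (2 < B p)%N) B p)%N.
have Hnat : (T + 6 * #|S| <= 3 * #|E|)%N.
  have -> : T = (\sum_(p : 'I_N * 'I_N | (p.1 <= p.2)%N) (if (2 < B p)%N then B p else 0))%N
    by rewrite /T big_mkcondr.
  have -> : (6 * #|S| = \sum_(p : 'I_N * 'I_N | (p.1 <= p.2)%N) (if (0 < B p)%N then 6 else 0))%N.
    rewrite -big_mkcondr sum_nat_const mulnC; congr (_ * _)%N.
    by apply: eq_card => p; rewrite !inE.
  rewrite -big_split Hsum big_distrr /=; apply: leq_sum => p hp.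
  have := HB2 p hp; case: (B p) => [|[|[|n]]] //= h; lia.
have -> : (\sum_(p : 'I_N * 'I_N | (p.1 <= p.2)%N && (2 < bcount root par l p.1 p.2)%N)
      (bcount root par l p.1 p.2)%:R : rat) = (T%:R)%R by rewrite /T natr_sum.
rewrite /Delta /nedges /nlabels -/E -/L.
have Hq : (T + 6 * #|L| <= 3 * #|E| + 6)%N by lia.
have : ((T + 6 * #|L|)%:R <= (3 * #|E| + 6)%:R :> rat)%R by rewrite ler_nat.
rewrite ?natrD ?natrM.
set x := (T%:R : rat). set y := (#|L|%:R : rat). set z := (#|E|%:R : rat).
move=> h.
lra.
Qed.
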